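(* For every $L\ge1$, the Lie algebra $\mathfrak{OA}_{1,L}=\mathfrak{OA}/\mathfrak I_{(t-1)^L}$ is solvable of dimension $L+\lfloor L/2\rfloor$, and the images of $X_k$ ($0\le k<L$) together with the images of $Y_j$ ($0\le j<L$, $j$ odd) form a basis of it.
   Context: Work over $\mathbb C$. $\mathfrak{sl}_2$ has basis $e,f,h$ with $[e,f]=h$, $[h,e]=2e$, $[h,f]=-2f$. The Onsager algebra is the Lie subalgebra $\mathfrak{OA}=\{p(t)e+p(t^{-1})f+q(t)h:\ p,q\in\mathbb C[t,t^{-1}],\ q(t^{-1})=-q(t)\}$ of the loop algebra $\mathbb C[t,t^{-1}]\otimes\mathfrak{sl}_2$ (bracket $[px,qy]=pq[x,y]$). $\mathfrak I_{(t-1)^L}=\{p(t)e+p(t^{-1})f+q(t)h\in\mathfrak{OA}: p,q\in(t-1)^L\mathbb C[t,t^{-1}]\}$. For $k\ge0$, $X_k=2(t-1)^ke+2(t^{-1}-1)^kf$ and $Y_k=(-1)^k\big((t-1)^k-(t^{-1}-1)^k\big)h$, elements of $\mathfrak{OA}$. $\lfloor r\rfloor$ is the integer part. *)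

(* Defs.v *)
From HB Require Import structures.
From mathcomp Require Import all_boot all_algebra.
From mathcomp Require Import complex Rstruct.
Set Implicit Arguments. Unset Strict Implicit. Unset Printing Implicit Defensive.
Import GRing.Theory.
Local Open Scope ring_scope.

Definition C : fieldType := (Rdefinitions.R)[i].

(* Rational functions C(t); Laurent polynomials C[t,t^-1] are the subring below. *)
Definition LF : fieldType := {fraction {poly C}}.
Definition tofr (p : {poly C}) : LF := @FracField.tofrac _ p.
Definition cst (c : C) : LF := tofr c%:P.
Definition tvar : LF := tofr 'X.

Definition laurent (f : LF) : Prop :=
  exists (n : nat) (p : {poly C}), f = tofr p / tvar ^+ n.

(* The automorphism of C(t) induced by t |-> t^-1 (restricts to p(t) |-> p(t^-1)
   on Laurent polynomials). *)
Definition sigma0 (p : {poly C}) : LF := (map_poly cst p).[tvar^-1].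
Definition sigma (f : LF) : LF :=
  sigma0 \n_(repr f) / sigma0 \d_(repr f).

(* sl2 basis, loop algebra realized inside 2x2 matrices over C(t). *)
Definition E_ : 'M[LF]_2 := \matrix_(i < 2, j < 2) ((i == 0) && (j == 1))%:R.
Definition F_ : 'M[LF]_2 := \matrix_(i < 2, j < 2) ((i == 1) && (j == 0))%:R.
Definition H_ : 'M[LF]_2 :=
  \matrix_(i < 2, j < 2) (if i == j then (if i == 0 then 1 else -1) else 0).

Definition mk (a b c : LF) : 'M[LF]_2 := a *: E_ + b *: F_ + c *: H_.

Definition lbr (x y : 'M[LF]_2) : 'M[LF]_2 := x *m y - y *m x.

Definition cscale (c : C) (x : 'M[LF]_2) : 'M[LF]_2 := cst c *: x.

Definition OA (x : 'M[LF]_2) : Prop :=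
  exists p q : LF, [/\ laurent p, laurent q, sigma q = - q & x = mk p (sigma p) q].

Definition inI (L : nat) (x : 'M[LF]_2) : Prop :=
  exists p q : LF, [/\ laurent p, laurent q, sigma q = - q & x = mk p (sigma p) q] /\
    (exists r, laurent r /\ p = (tvar - 1) ^+ L * r) /\
    (exists r, laurent r /\ q = (tvar - 1) ^+ L * r).

Definition Xk (k : nat) : 'M[LF]_2 :=
  mk (2%:R * (tvar - 1) ^+ k) (2%:R * (tvar^-1 - 1) ^+ k) 0.
Definition Yk (k : nat) : 'M[LF]_2 :=
  mk 0 0 ((-1) ^+ k * ((tvar - 1) ^+ k - (tvar^-1 - 1) ^+ k)).

Inductive derived : nat -> 'M[LF]_2 -> Prop :=
| derived0 x : OA x -> derived 0 x
| derived_br n x y : derived n x -> derived n y -> derived n.+1 (lbr x y)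
| derived_zero n : derived n.+1 0
| derived_add n x y : derived n.+1 x -> derived n.+1 y -> derived n.+1 (x + y)
| derived_scale n c x : derived n.+1 x -> derived n.+1 (cscale c x).

(* OA/I_{(t-1)^L} is solvable: its derived series, which is the image of
   the derived series of OA, reaches 0, i.e. some D n is contained in I. *)
Definition quot_solvable (L : nat) : Prop :=
  exists n, forall x, derived n x -> inI L x.

Definition lcomb (a : nat -> C) (s : seq 'M[LF]_2) : 'M[LF]_2 :=
  \sum_(i < size s) cscale (a i) s`_i.

Definition quot_basis (L : nat) (s : seq 'M[LF]_2) : Prop :=
  [/\ forall x, x \in s -> OA x,
      (forall a : nat -> C, inI L (lcomb a s) -> forall i, (i < size s)%N -> a i = 0) &
      (forall x, OA x -> exists a : nat -> C, inI L (x - lcomb a s))].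

Definition quot_dim (L d : nat) : Prop :=
  exists s, size s = d /\ quot_basis L s.

Definition basis_family (L : nat) : seq 'M[LF]_2 :=
  [seq Xk k | k <- iota 0 L] ++ [seq Yk j | j <- iota 0 L & odd j].

(* Main.v *)
Require Import Defs.
From HB Require Import structures.
From mathcomp Require Import all_boot all_algebra.
From mathcomp Require Import complex Rstruct ring zify.
Set Implicit Arguments. Unset Strict Implicit. Unset Printing Implicit Defensive.
Import GRing.Theory.
Local Open Scope ring_scope.


Lemma two_neq0 : (2%:R : C) != 0.
Proof. rewrite /C. by rewrite Num.Theory.pnatr_eq0. Qed.

Lemma frac_repr (x : LF) : x = tofr \n_(repr x) / tofr \d_(repr x).
Proof.
rewrite /tofr; unlock FracField.tofrac.
rewrite -[x in LHS]reprK.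
set r := repr x.
have Hi := FracField.pi_inv (Ratio \d_r 1).
rewrite /FracField.invf !numden_Ratio ?oner_neq0 // in Hi.
have Hm := FracField.pi_mul (Ratio \n_r 1) (Ratio 1 \d_r).
rewrite /FracField.mulf !numden_Ratio ?oner_neq0 ?denom_ratioP // in Hm.
rewrite (mulr1 \n_r) (mul1r \d_r) Ratio_numden in Hm.
rewrite Hm Hi. by [].
Qed.

Definition tofrm : {rmorphism {poly C} -> LF} := @FracField.tofrac {poly C}.
Lemma tofrE p : tofr p = tofrm p. Proof. by []. Qed.
Definition cstm : {rmorphism C -> LF} := tofrm \o polyC.
Lemma cstE c : cst c = cstm c. Proof. by []. Qed.

Lemma tofr_inj p q : tofr p = tofr q -> p = q.
Proof. by move=> /eqP; rewrite /tofr tofrac_eq => /eqP. Qed.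

Lemma tvar_neq0 : tvar != 0.
Proof. rewrite /tvar -(rmorph0 tofrm) /=. apply/eqP=> /tofr_inj/eqP. by rewrite polyX_eq0. Qed.

Lemma tofr_horner p : (map_poly cst p).[tvar] = tofr p.
Proof.
rewrite tofrE (poly_initial tofrm p) /horner_morph /=.
by [].
Qed.

Lemma commr_inv : commr_rmorph cstm tvar^-1.
Proof. by move=> a; rewrite /GRing.comm mulrC. Qed.

Lemma sigma0E p : sigma0 p = horner_morph commr_inv p.
Proof. by []. Qed.

Lemma sigma0D p q : sigma0 (p + q) = sigma0 p + sigma0 q.
Proof. by rewrite !sigma0E rmorphD. Qed.
Lemma sigma0M p q : sigma0 (p * q) = sigma0 p * sigma0 q.
Proof. by rewrite !sigma0E rmorphM. Qed.
Lemma sigma0C c : sigma0 c%:P = cst c.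
Proof. by rewrite sigma0E horner_morphC. Qed.
Lemma sigma0X : sigma0 'X = tvar^-1.
Proof. by rewrite sigma0E horner_morphX. Qed.

Lemma tvar_unit : tvar \is a GRing.unit.
Proof. by rewrite unitfE tvar_neq0. Qed.

Lemma tofr_poly n (E : nat -> C) :
  tofr (\poly_(i < n) E i) = \sum_(i < n) cst (E i) * tvar ^+ i.
Proof.
rewrite poly_def tofrE rmorph_sum /=. apply: eq_bigr => i _.
by rewrite -mul_polyC rmorphM rmorphXn /=.
Qed.

Lemma sigma0_sum p : sigma0 p = \sum_(i < size p) cst p`_i * tvar^-1 ^+ i.
Proof.
rewrite /sigma0 (horner_coef_wide _ (eq_leq (size_map_poly cstm p))).
apply: eq_bigr => i _. by rewrite coef_map.
Qed.

Lemma sigma0_rev p : sigma0 p * tvar ^+ (size p).-1 =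
   tofr (\poly_(i < size p) p`_((size p).-1 - i)).
Proof.
rewrite tofr_poly sigma0_sum.
case E: (size p) => [|m] /=; first by rewrite !big_ord0 mul0r.
rewrite mulr_suml (reindex_inj rev_ord_inj) /=.
apply: eq_bigr => i _.
rewrite subSS -mulrA. congr (_ * _).
have hi : (i <= m)%N by rewrite -ltnS.
have -> : tvar ^+ m = tvar ^+ (m - i) * tvar ^+ i by rewrite -exprD subnK.
by rewrite exprVn mulKf // expf_neq0 // tvar_neq0.
Qed.

Lemma sigma0_neq0 p : p != 0 -> sigma0 p != 0.
Proof.
move=> p0; apply/eqP=> s0.
have := sigma0_rev p. rewrite s0 mul0r => /esym.
rewrite -(rmorph0 tofrm) -tofrE => /tofr_inj /polyP /(_ 0%N).
rewrite coef_poly coef0 size_poly_gt0 p0 subn0 => /eqP.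
by rewrite -lead_coefE lead_coef_eq0 (negPf p0).
Qed.
Lemma tofr_neq0 p : p != 0 -> tofr p != 0.
Proof. by rewrite /tofr tofrac_eq0. Qed.

Lemma sigmaE n d : d != 0 -> sigma (tofr n / tofr d) = sigma0 n / sigma0 d.
Proof.
move=> d0. rewrite /sigma.
set f := tofr n / tofr d.
have := frac_repr f. set r := repr f => e.
have dr0 : \d_r != 0 by apply: denom_ratioP.
have : n * \d_r = \n_r * d.
  apply: tofr_inj. rewrite !tofrE !rmorphM /= -!tofrE.
  apply/eqP. rewrite -eqr_div ?tofr_neq0 //. by apply/eqP.
move=> /(congr1 sigma0). rewrite !sigma0M => h.
apply/eqP. rewrite eqr_div ?sigma0_neq0 //. by rewrite h.
Qed.
Lemma frac_ex (f : LF) : exists n d, d != 0 /\ f = tofr n / tofr d.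
Proof. exists \n_(repr f), \d_(repr f); split; [exact: denom_ratioP | exact: frac_repr]. Qed.

Lemma divB_gen (F : fieldType) (a b c d : F) : b != 0 -> d != 0 ->
  a / b - c / d = (a * d - c * b) / (b * d).
Proof. move=> b0 d0. field. by rewrite b0 d0. Qed.
Lemma sigmaB : zmod_morphism sigma.
Proof.
move=> f g. have [n [d [d0 ->]]] := frac_ex f. have [n' [d' [d0' ->]]] := frac_ex g.
rewrite divB_gen ?tofr_neq0 //.
have -> : tofr n * tofr d' - tofr n' * tofr d = tofr (n * d' - n' * d)
  by rewrite !tofrE rmorphB !rmorphM.
have -> : tofr d * tofr d' = tofr (d * d') by rewrite !tofrE rmorphM.
rewrite !sigmaE ?mulf_neq0 // divB_gen ?sigma0_neq0 //.
have hB : forall p q, sigma0 (p - q) = sigma0 p - sigma0 q.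
  by move=> p q; rewrite !sigma0E rmorphB.
by rewrite hB !sigma0M.
Qed.

Lemma sigmaM : monoid_morphism sigma.
Proof.
split.
  have -> : (1 : LF) = tofr 1 / tofr 1 by rewrite tofrE rmorph1 divr1.
  rewrite sigmaE ?oner_neq0 //. by rewrite !sigma0E rmorph1 divr1.
move=> f g. have [n [d [d0 ->]]] := frac_ex f. have [n' [d' [d0' ->]]] := frac_ex g.
rewrite mulf_div !tofrE -!rmorphM -!tofrE.
by rewrite !sigmaE ?mulf_neq0 // mulf_div !sigma0M.
Qed.

HB.instance Definition _ := GRing.isZmodMorphism.Build LF LF sigma sigmaB.
HB.instance Definition _ := GRing.isMonoidMorphism.Build LF LF sigma sigmaM.

Lemma sigma_tofr p : sigma (tofr p) = sigma0 p.
Proof.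
have -> : tofr p = tofr p / tofr 1 by rewrite [tofr 1]tofrE rmorph1 divr1.
by rewrite sigmaE ?oner_neq0 // !sigma0E rmorph1 divr1.
Qed.

Lemma sigma_cst c : sigma (cst c) = cst c.
Proof. by rewrite /cst sigma_tofr sigma0C. Qed.

Lemma sigma_t : sigma tvar = tvar^-1.
Proof. by rewrite /tvar sigma_tofr sigma0X. Qed.

Lemma sigma_tV : sigma tvar^-1 = tvar.
Proof. by rewrite fmorphV /= sigma_t invrK. Qed.

Lemma sigma_sigma0 p : sigma (sigma0 p) = tofr p.
Proof.
rewrite /sigma0 -tofr_horner -horner_map /= sigma_tV -map_poly_comp.
congr (_.[_]). apply: eq_map_poly => c /=. by rewrite sigma_cst.
Qed.

Lemma sigmaK f : sigma (sigma f) = f.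
Proof.
have [n [d [d0 ->]]] := frac_ex f.
by rewrite sigmaE // fmorph_div /= !sigma_sigma0.
Qed.

Lemma divD_gen (F : fieldType) (a b c d : F) : b != 0 -> d != 0 ->
  a / b + c / d = (a * d + c * b) / (b * d).
Proof. move=> b0 d0. field. by rewrite b0 d0. Qed.

Lemma texp_neq0 n : tvar ^+ n != 0.
Proof. by rewrite expf_neq0 // tvar_neq0. Qed.

Lemma tofrX n : tofr 'X^n = tvar ^+ n.
Proof. by rewrite tofrE rmorphXn. Qed.

Lemma tofrM p q : tofr (p * q) = tofr p * tofr q.
Proof. by rewrite !tofrE rmorphM. Qed.
Lemma tofrD p q : tofr (p + q) = tofr p + tofr q.
Proof. by rewrite !tofrE rmorphD. Qed.
Lemma tofrB p q : tofr (p - q) = tofr p - tofr q.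
Proof. by rewrite !tofrE rmorphB. Qed.
Lemma tofrN p : tofr (- p) = - tofr p.
Proof. by rewrite !tofrE rmorphN. Qed.
Lemma tofr1 : tofr 1 = 1.
Proof. by rewrite !tofrE rmorph1. Qed.
Lemma tofr0 : tofr 0 = 0.
Proof. by rewrite !tofrE rmorph0. Qed.

Lemma lau_tofr p : laurent (tofr p).
Proof. by exists 0%N, p; rewrite expr0 divr1. Qed.

Lemma lau_add f g : laurent f -> laurent g -> laurent (f + g).
Proof.
move=> [n [P ->]] [m [Q ->]].
exists (n + m)%N, (P * 'X^m + Q * 'X^n).
by rewrite divD_gen ?texp_neq0 // tofrD !tofrM !tofrX exprD.
Qed.

Lemma lau_mul f g : laurent f -> laurent g -> laurent (f * g).
Proof.
move=> [n [P ->]] [m [Q ->]].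
exists (n + m)%N, (P * Q). by rewrite mulf_div tofrM exprD.
Qed.

Lemma lau_opp f : laurent f -> laurent (- f).
Proof. move=> [n [P ->]]. exists n, (- P). by rewrite tofrN mulNr. Qed.

Lemma lau_sub f g : laurent f -> laurent g -> laurent (f - g).
Proof. by move=> hf hg; apply: lau_add => //; apply: lau_opp. Qed.

Lemma lau_cst c : laurent (cst c).
Proof. exact: lau_tofr. Qed.
Lemma lau_1 : laurent 1.
Proof. by rewrite -tofr1; apply: lau_tofr. Qed.
Lemma lau_0 : laurent 0.
Proof. by rewrite -tofr0; apply: lau_tofr. Qed.
Lemma lau_t : laurent tvar.
Proof. exact: lau_tofr. Qed.
Lemma lau_tV : laurent tvar^-1.
Proof. exists 1%N, 1. by rewrite tofr1 expr1 mul1r. Qed.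
Lemma lau_exp f n : laurent f -> laurent (f ^+ n).
Proof. move=> h; elim: n => [|n IH]; first by rewrite expr0; apply: lau_1.
by rewrite exprS; apply: lau_mul. Qed.
Lemma lau_nat n : laurent n%:R.
Proof. have -> : (n%:R : LF) = cst n%:R by rewrite /cst /tofr !rmorph_nat. exact: lau_cst. Qed.

Lemma sigma0_lau p : laurent (sigma0 p).
Proof.
exists (size p).-1, (\poly_(i < size p) p`_((size p).-1 - i)).
by rewrite -sigma0_rev mulfK // texp_neq0.
Qed.

Lemma lau_sigma f : laurent f -> laurent (sigma f).
Proof.
move=> [n [P ->]]. rewrite fmorph_div /= sigma_tofr rmorphXn /= sigma_t exprVn invrK.
apply: lau_mul; [exact: sigma0_lau | exact: lau_exp lau_t].
Qed.

Definition u : LF := tvar - 1.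
Definition Dv (k : nat) (f : LF) := exists r, laurent r /\ f = u ^+ k * r.

Lemma u_tofr : u = tofr ('X - 1%:P).
Proof. by rewrite tofrB /u /tvar tofr1. Qed.

Lemma u_neq0 : u != 0.
Proof. by rewrite u_tofr tofr_neq0 // polyXsubC_eq0. Qed.

Lemma lau_u : laurent u.
Proof. rewrite u_tofr; exact: lau_tofr. Qed.

Lemma factor1 P : tofr P = cst P.[1] + u * tofr (P %/ ('X - 1%:P)).
Proof.
rewrite {1}(divp_eq P ('X - 1%:P)) modp_XsubC tofrD tofrM -u_tofr.
by rewrite addrC mulrC.
Qed.

Lemma lau_dec f : laurent f -> exists c r, laurent r /\ f = cst c + u * r.
Proof.
move=> [n [P ->]].
set c := P.[1].
set Q := P - c%:P * 'X^n.
have hQ : Q.[1] = 0 by rewrite /Q !hornerE expr1n mulr1 subrr.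
exists c, (tofr (Q %/ ('X - 1%:P)) / tvar ^+ n); split.
  by exists n, (Q %/ ('X - 1%:P)).
have : tofr Q = u * tofr (Q %/ ('X - 1%:P)).
  by rewrite {1}factor1 hQ /cst tofr0 add0r.
rewrite /Q tofrB tofrM tofrX => /(congr1 (fun x => x / tvar ^+ n)).
rewrite mulrBl mulfK ?texp_neq0 // mulrA => <-.
by rewrite /cst addrC subrK.
Qed.

Lemma lau_u_cst r c : laurent r -> u * r = cst c -> c = 0.
Proof.
move=> [n [Q ->]] /(congr1 (fun x => x * tvar ^+ n)).
rewrite mulrA mulfVK ?texp_neq0 // u_tofr /cst -tofrX -!tofrM => /tofr_inj.
move=> /(congr1 (fun p => p.[1])).
by rewrite !hornerE subrr mul0r expr1n mulr1 => <-.
Qed.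

Lemma Dv_lau k f : Dv k f -> laurent f.
Proof. move=> [r [hr ->]]. apply: lau_mul => //; apply: lau_exp; exact: lau_u. Qed.

Lemma Dv0 f : laurent f -> Dv 0 f.
Proof. by move=> h; exists f; rewrite expr0 mul1r. Qed.

Lemma Dv_zero k : Dv k 0.
Proof. exists 0; split; [exact: lau_0 | by rewrite mulr0]. Qed.

Lemma Dv_le a b f : (a <= b)%N -> Dv b f -> Dv a f.
Proof.
move=> hab [r [hr ->]]. exists (u ^+ (b - a) * r); split.
  by apply: lau_mul => //; apply: lau_exp; exact: lau_u.
by rewrite mulrA -exprD subnKC.
Qed.

Lemma Dv_add k f g : Dv k f -> Dv k g -> Dv k (f + g).
Proof.
move=> [r [hr ->]] [s [hs ->]]. exists (r + s); split; first exact: lau_add.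
by rewrite mulrDr.
Qed.

Lemma Dv_opp k f : Dv k f -> Dv k (- f).
Proof. move=> [r [hr ->]]. exists (- r); split; [exact: lau_opp | by rewrite mulrN]. Qed.

Lemma Dv_sub k f g : Dv k f -> Dv k g -> Dv k (f - g).
Proof. by move=> hf hg; apply: Dv_add => //; apply: Dv_opp. Qed.

Lemma Dv_mull k f g : laurent g -> Dv k f -> Dv k (g * f).
Proof.
move=> hg [r [hr ->]]. exists (g * r); split; first exact: lau_mul.
by rewrite mulrCA.
Qed.

Lemma Dv_mul a b f g : Dv a f -> Dv b g -> Dv (a + b) (f * g).
Proof.
move=> [r [hr ->]] [s [hs ->]]. exists (r * s); split; first exact: lau_mul.
by rewrite exprD mulrACA.
Qed.

Lemma Dv_u k : Dv k (u ^+ k).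
Proof. exists 1; split; [exact: lau_1 | by rewrite mulr1]. Qed.

Lemma Dv_sum k n (F : 'I_n -> LF) : (forall i, Dv k (F i)) -> Dv k (\sum_(i < n) F i).
Proof.
move=> h. elim/big_ind: _ => //; [exact: Dv_zero | exact: Dv_add].
Qed.

Lemma sigma_u : sigma u = - (u * tvar^-1).
Proof.
rewrite /u rmorphB rmorph1 /= sigma_t mulrBl mul1r divff ?tvar_neq0 //.
by rewrite opprB.
Qed.



Lemma Dv_sigma k f : Dv k f -> Dv k (sigma f).
Proof.
move=> [r [hr ->]]. rewrite rmorphM rmorphXn /= sigma_u exprNn exprMn.
exists ((-1) ^+ k * (tvar^-1 ^+ k * sigma r)); split.
  apply: lau_mul; first by apply: lau_exp; apply: lau_opp; exact: lau_1.
  apply: lau_mul; [by apply: lau_exp; exact: lau_tV | exact: lau_sigma].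
by rewrite -!mulrA; exact: mulrCA.
Qed.

Lemma Dv_cst0 k c : Dv k.+1 (cst c * u ^+ k) -> c = 0.
Proof.
move=> [r [hr]]. rewrite exprS mulrC -mulrA mulrCA.
have h : u ^+ k != 0 by rewrite expf_neq0 // u_neq0.
move=> /(mulfI h) /esym. exact: lau_u_cst.
Qed.

Lemma Dv_next k f : Dv k f -> exists c, Dv k.+1 (f - cst c * u ^+ k).
Proof.
move=> [r [hr ->]]. have [c [s [hs ->]]] := lau_dec hr.
exists c, s; split => //.
rewrite exprS. set a := u ^+ k. set b := cst c.
by rewrite mulrDr [b * _]mulrC addrAC subrr add0r mulrCA mulrA.
Qed.

Lemma gen1 (R : comRingType) (T S r c1 c2 w X s : R) :
  T * S = - r -> S = c1 + w * X -> r = c2 + w * s ->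
  c1 + c2 = - (S * (T - 1) + (w * X + w * s)).
Proof. move=> h1 h2 h3. rewrite h2 in h1 *. rewrite h3 in h1 *. 
  have h4 : T * (c1 + w * X) + (c2 + w * s) = 0 by rewrite h1 addNr.
  apply/eqP; rewrite -subr_eq0; apply/eqP; rewrite -h4. ring. Qed.

Lemma gen2 (R : comRingType) (T : nat) (x : R) : x ^+ T.+1 - 1 = x * (x ^+ T - 1) + (x - 1).
Proof. rewrite exprS. ring. Qed.

Lemma tV_sub1 : tvar^-1 - 1 = u * (- tvar^-1).
Proof. by rewrite mulrN -sigma_u /u rmorphB rmorph1 /= sigma_t. Qed.

Lemma Dv_tVexp m : Dv 1 (tvar^-1 ^+ m - 1).
Proof.
elim: m => [|m IH]; first by rewrite expr0 subrr; exact: Dv_zero.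
rewrite gen2. apply: Dv_add; first by apply: Dv_mull => //; exact: lau_tV.
rewrite tV_sub1. exists (- tvar^-1); split; first by apply: lau_opp; exact: lau_tV.
by rewrite expr1.
Qed.

Lemma cstD a b : cst (a + b) = cst a + cst b.
Proof. by rewrite !cstE rmorphD. Qed.
Lemma cstM a b : cst (a * b) = cst a * cst b.
Proof. by rewrite !cstE rmorphM. Qed.
Lemma cstN a : cst (- a) = - cst a.
Proof. by rewrite !cstE rmorphN. Qed.
Lemma cst_nat n : cst n%:R = n%:R.
Proof. by rewrite !cstE rmorph_nat. Qed.
Lemma cst0 : cst 0 = 0.
Proof. by rewrite !cstE rmorph0. Qed.
Lemma cst_inj a b : cst a = cst b -> a = b.
Proof. by move=> /tofr_inj /polyC_inj. Qed.

Lemma Dv1_cst c : Dv 1 (cst c) -> c = 0.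
Proof. move=> h; apply: (@Dv_cst0 0). by rewrite expr0 mulr1. Qed.

Lemma gen3 (R : comRingType) (x : R) (k : nat) : (- x) ^+ (k.*2) = x ^+ (k.*2).
Proof. by rewrite -mul2n exprM sqrrN -exprM. Qed.

Lemma cc0 (c : C) : c + c = 0 -> c = 0.
Proof.
move=> h. have : (2%:R : C) * c = 0 by rewrite mulr2n mulrDl mul1r.
by move/eqP; rewrite mulf_eq0 (negPf two_neq0) => /eqP.
Qed.

Lemma anti_even k q : sigma q = - q -> Dv (k.*2) q -> Dv (k.*2).+1 q.
Proof.
move=> hq [r [hr er]]. have [c [s [hs es]]] := lau_dec hr.
suff c0 : c = 0.
  exists s; split => //. by rewrite er es c0 cst0 add0r exprS mulrCA mulrA.
move: hq. rewrite er rmorphM rmorphXn /= sigma_u gen3 exprMn -mulrA -mulrN.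
move=> /(mulfI (expf_neq0 _ u_neq0)) h.
have eS : sigma r = cst c + u * (- (tvar^-1 * sigma s)).
  by rewrite es rmorphD rmorphM /= sigma_cst sigma_u mulNr mulrN -mulrA.
have := gen1 h eS es. rewrite -cstD => e.
apply: cc0; apply: Dv1_cst; rewrite e. apply: Dv_opp. apply: Dv_add.
  apply: Dv_mull; [exact: lau_sigma | exact: Dv_tVexp].
apply: Dv_add.
  exists (- (tvar^-1 * sigma s)); split; last by rewrite expr1.
  apply: lau_opp; apply: lau_mul; [exact: lau_tV | exact: lau_sigma].
by exists s; rewrite expr1.
Qed.

Definition yy (j : nat) : LF := (-1) ^+ j * ((tvar - 1) ^+ j - (tvar^-1 - 1) ^+ j).

Lemma sigma_tm1 : sigma (tvar - 1) = tvar^-1 - 1.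
Proof. by rewrite rmorphB rmorph1 /= sigma_t. Qed.
Lemma sigma_tVm1 : sigma (tvar^-1 - 1) = tvar - 1.
Proof. by rewrite rmorphB rmorph1 /= sigma_tV. Qed.

Lemma yy_anti j : sigma (yy j) = - yy j.
Proof.
rewrite /yy rmorphM rmorphB !rmorphXn /= rmorphN1 sigma_tm1 sigma_tVm1.
by rewrite -mulrN opprB.
Qed.

Lemma lau_yy j : laurent (yy j).
Proof.
apply: lau_mul; first by apply: lau_exp; apply: lau_opp; exact: lau_1.
apply: lau_sub; apply: lau_exp; apply: lau_sub; (exact: lau_t || exact: lau_tV || exact: lau_1).
Qed.

Lemma gen4 (R : comRingType) (U T : R) :
  - (U - (- (U * T))) - (- 2%:R) * U = - (U * (T - 1)).
Proof. ring. Qed.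

Lemma yy_odd j : odd j -> Dv j.+1 (yy j - cst (- 2%:R) * u ^+ j).
Proof.
move=> oj. rewrite /yy -/u tV_sub1 -signr_odd oj expr1 mulN1r.
rewrite exprMn exprNn -signr_odd oj expr1 mulN1r mulrN cstN cst_nat gen4.
apply: Dv_opp. rewrite -addn1. apply: Dv_mul; first exact: Dv_u.
rewrite exprVn -exprVn. exact: Dv_tVexp.
Qed.

Lemma gen5 (R : comRingType) (U T : R) :  - U = (- 1) * U.
Proof. by rewrite mulN1r. Qed.

Lemma lau_cstm c f : laurent f -> laurent (cst c * f).
Proof. by move=> h; apply: lau_mul => //; exact: lau_cst. Qed.

Lemma mono_e (e : nat -> nat) : (forall i, (e i < e i.+1)%N) ->
  forall i d, (e i + d <= e (i + d))%N.
Proof.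
move=> he i; elim=> [|d IH]; first by rewrite !addn0.
rewrite addnS addnS. exact: leq_ltn_trans IH (he _).
Qed.

Lemma tri_indep n N (e : nat -> nat) (g : nat -> LF) (kap : C) (b : nat -> C) :
  kap != 0 ->
  (forall i, Dv (e i).+1 (g i - cst kap * u ^+ (e i))) ->
  (forall i, (e i < e i.+1)%N) ->
  (forall i, (i < n)%N -> (e i < N)%N) ->
  Dv N (\sum_(i < n) cst (b i) * g i) -> forall i, (i < n)%N -> b i = 0.
Proof.
move=> k0; elim: n e g b => [|n IH] e g b hg he hN hS i hi; first by [].
have gD : forall j, Dv (e j) (g j).
  move=> j. have -> : g j = (g j - cst kap * u ^+ e j) + cst kap * u ^+ e j by rewrite subrK.
  apply: Dv_add; first exact: Dv_le (leqnSn _) (hg j).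
  apply: Dv_mull; [exact: lau_cst | exact: Dv_u].
move: hS; rewrite big_ord_recl /=.
set rest := \sum_(i < n) _.
have hrest : Dv (e 0%N).+1 rest.
  apply: Dv_sum => j. apply: Dv_mull; first exact: lau_cst.
  apply: Dv_le (gD _). have bj : bump 0 j = j.+1 by rewrite /bump leq0n.
  rewrite bj. have := mono_e he 0 j.+1. rewrite add0n.
  apply: leq_trans. by rewrite addnS ltnS leq_addr.
move=> hS.
have b0 : b 0%N = 0.
  have h1 : Dv (e 0%N).+1 (cst (b 0%N) * g 0%N).
    have -> : cst (b 0%N) * g 0%N = (cst (b 0%N) * g 0%N + rest) - rest by rewrite addrK.
    apply: Dv_sub => //. apply: Dv_le hS. exact: hN.
  have h2 : Dv (e 0%N).+1 (cst (b 0%N * kap) * u ^+ e 0%N).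
    have -> : cst (b 0%N * kap) * u ^+ e 0%N =
       cst (b 0%N) * g 0%N - cst (b 0%N) * (g 0%N - cst kap * u ^+ e 0%N).
      by rewrite mulrBr opprB addrC subrK cstM mulrA.
    apply: Dv_sub => //. apply: Dv_mull => //; exact: lau_cst.
  have := Dv_cst0 h2. by move/eqP; rewrite mulf_eq0 (negPf k0) orbF => /eqP.
case: i hi => [|i] hi //.
apply: (IH (fun j => e j.+1) (fun j => g j.+1) (fun j => b j.+1)) => //.
  by move=> j hj; apply: hN.
move: hS; rewrite b0 cst0 mul0r add0r. by move=> h; exact: h.
Qed.

Lemma expand L f : laurent f ->
  exists c : nat -> C, Dv L (f - \sum_(i < L) cst (c i) * u ^+ i).
Proof.
move=> hf; elim: L => [|L [c hc]].
  exists (fun _ => 0). rewrite big_ord0 subr0. exact: Dv0.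
have [c0 h0] := Dv_next hc.
exists (fun i => if i == L then c0 else c i).
rewrite big_ord_recr /= eqxx.
have -> : \sum_(i < L) cst (if val i == L then c0 else c i) * u ^+ i =
          \sum_(i < L) cst (c i) * u ^+ i.
  apply: eq_bigr => i _. by rewrite (ltn_eqF (ltn_ord i)).
by rewrite opprD addrA.
Qed.

Definition Yspan L q := exists b : nat -> C,
  Dv L (q - \sum_(i < L./2) cst (b i) * yy (i.*2.+1)).

Lemma gen7 (R : comRingType) (q a y Sb Sr : R) :
  q - a * y - (Sb + - (a * y) + Sr) = q - (Sb + Sr).
Proof. ring. Qed.

Lemma Yspan_sub L q i0 c : (i0 < L./2)%N -> Yspan L q ->
  Yspan L (q - cst c * yy (i0.*2.+1)).
Proof.
move=> hi [b hb].
exists (fun i => if i == i0 then b i + - c else b i).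
rewrite (bigD1 (Ordinal hi)) //=.
rewrite (bigD1 (Ordinal hi)) //= in hb.
rewrite eqxx cstD cstN mulrDl mulNr.
have -> : \sum_(i < L./2 | i != Ordinal hi)
     cst (if val i == i0 then b i + - c else b i) * yy (i.*2.+1) =
   \sum_(i < L./2 | i != Ordinal hi) cst (b i) * yy (i.*2.+1).
  apply: eq_bigr => i hi'. have -> : (val i == i0) = false; last by [].
  apply/negbTE. apply: contra hi' => /eqP e. apply/eqP. exact: val_inj.
move: hb. by rewrite gen7.
Qed.

Lemma gen6 (R : comRingType) (U s cc k K2 Y : R) (m : nat) :
  k * K2 = - cc ->
  U ^+ m * (cc + U * s) + k * Y = U ^+ m.+1 * s + k * (Y - K2 * U ^+ m).
Proof. move=> h. rewrite exprS mulrBr mulrA h. ring. Qed.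

Lemma half_lt m L : odd m -> (m < L)%N -> (m./2 < L./2)%N.
Proof.
move=> om hm. have h := half_leq hm.
by rewrite -uphalfE uphalf_half om in h.
Qed.

Lemma Yspan_aux L k q : sigma q = - q -> Dv (L - k) q -> Yspan L q.
Proof.
elim: k q => [|k IH] q hq hD.
  exists (fun _ => 0). rewrite big1 ?subr0; first by rewrite subn0 in hD.
  by move=> i _; rewrite cst0 mul0r.
case: (leqP L k) => hLk.
  apply: IH => //. have -> : (L - k = L - k.+1)%N by lia. exact: hD.
have eL : (L - k = (L - k.+1).+1)%N by lia.
have hm : (L - k.+1 < L)%N by lia.
move: hD. set m := (L - k.+1)%N => hD.
have e := odd_double_half m.
case om: (odd m); rewrite om /= in e.
-
  move: hD => [r [hr er]]. have [c [s [hs es]]] := lau_dec hr.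
  set q' := q + cst (c / 2%:R) * yy m.
  have hq' : Dv (L - k) q'.
    rewrite eL /q' er es.
    rewrite (@gen6 _ u s (cst c) (cst (c / 2%:R)) (cst (- 2%:R)) (yy m) m).
      apply: Dv_add; first by exists s.
      apply: Dv_mull; [exact: lau_cst | exact: yy_odd].
    by rewrite -cstM mulrN divfK ?two_neq0 // cstN.
  have aq' : sigma q' = - q'.
    by rewrite /q' rmorphD rmorphM /= sigma_cst yy_anti hq opprD mulrN.
  have := Yspan_sub (c / 2%:R) (half_lt om hm) (IH q' aq' hq').
  rewrite add1n in e. by rewrite e /q' addrK.
-
  apply: IH => //. rewrite eL -/m. rewrite add0n in e. rewrite -e in hD *. exact: anti_even.
Qed.



Lemma mk01 a b c : (mk a b c) 0 1 = a.
Proof. rewrite /mk !mxE /=. by rewrite mulr1 !mulr0 !addr0. Qed.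
Lemma mk10 a b c : (mk a b c) 1 0 = b.
Proof. rewrite /mk !mxE /=. by rewrite mulr1 !mulr0 addr0 add0r. Qed.
Lemma mk00 a b c : (mk a b c) 0 0 = c.
Proof. rewrite /mk !mxE /=. by rewrite mulr1 !mulr0 !add0r. Qed.

Lemma mk_inj a b c a' b' c' : mk a b c = mk a' b' c' -> [/\ a = a', b = b' & c = c'].
Proof.
move=> e. have h1 := congr1 (fun M : 'M[LF]_2 => M 0 1) e.
have h2 := congr1 (fun M : 'M[LF]_2 => M 1 0) e.
have h3 := congr1 (fun M : 'M[LF]_2 => M 0 0) e.
by move: h1 h2 h3 => /=; rewrite !mk01 !mk10 !mk00.
Qed.

Lemma gen8 (V : zmodType) (x y z x' y' z' : V) :
  x + y + z + (x' + y' + z') = x + x' + (y + y') + (z + z').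
Proof. by rewrite addrACA (addrACA x). Qed.

Lemma mkD a b c a' b' c' : mk a b c + mk a' b' c' = mk (a + a') (b + b') (c + c').
Proof. by rewrite /mk gen8 !scalerDl. Qed.

Lemma mk0 : mk 0 0 0 = 0.
Proof. by rewrite /mk !scale0r !addr0. Qed.

Lemma mkN a b c : - mk a b c = mk (- a) (- b) (- c).
Proof. by rewrite /mk !scaleNr !opprD. Qed.

Lemma mkB a b c a' b' c' : mk a b c - mk a' b' c' = mk (a - a') (b - b') (c - c').
Proof. by rewrite mkN mkD. Qed.

Lemma mkZ k a b c : cscale k (mk a b c) = mk (cst k * a) (cst k * b) (cst k * c).
Proof. by rewrite /cscale /mk !scalerDr !scalerA. Qed.

Lemma mk_sum n (A B G : 'I_n -> LF) :
  \sum_(i < n) mk (A i) (B i) (G i) = mk (\sum_i A i) (\sum_i B i) (\sum_i G i).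
Proof.
elim: n A B G => [|n IH] A B G; first by rewrite !big_ord0 mk0.
by rewrite !big_ord_recr /= IH mkD.
Qed.

Definition M2 (R : comRingType) (a b c : R) : 'M[R]_2 :=
  \matrix_(i < 2, j < 2) (if i == 0 then (if j == 0 then c else a) else (if j == 0 then b else - c)).

Lemma gen_lbr (R : comRingType) (a b c a' b' c' : R) :
  M2 a b c *m M2 a' b' c' - M2 a' b' c' *m M2 a b c =
  M2 (2%:R * (c * a' - c' * a)) (2%:R * (b * c' - b' * c)) (a * b' - a' * b).
Proof.
apply/matrixP => i j. rewrite !mxE !big_ord_recr !big_ord0 /= !mxE /=.
case: i => [[|[|i]] hi]; case: j => [[|[|j]] hj] //=; ring.
Qed.

Lemma mkM2 a b c : mk a b c = M2 a b c.
Proof.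
apply/matrixP => i j. rewrite /mk /M2 !mxE /=.
case: i => [[|[|i]] hi]; case: j => [[|[|j]] hj] //=.
- by rewrite mulr1 !mulr0 !add0r.
- by rewrite mulr1 !mulr0 !addr0.
- by rewrite mulr1 !mulr0 addr0 add0r.
- by rewrite mulrN1 !mulr0 !add0r.
Qed.

Lemma lbr_mk a b c a' b' c' : lbr (mk a b c) (mk a' b' c') =
  mk (2%:R * (c * a' - c' * a)) (2%:R * (b * c' - b' * c)) (a * b' - a' * b).
Proof. by rewrite /lbr !mkM2 gen_lbr. Qed.



Lemma OA_mk p q : laurent p -> laurent q -> sigma q = - q -> OA (mk p (sigma p) q).
Proof. by move=> hp hq aq; exists p, q. Qed.

Lemma gen9 (R : comRingType) (s2 p q p' q' sp sq sp' sq' : R) :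
  sq = - q -> sq' = - q' ->
  s2 * (sq * sp' - sq' * sp) = s2 * (sp * q' - sp' * q).
Proof. move=> -> ->. ring. Qed.

Lemma gen10 (R : comRingType) (p p' sp sp' : R) :
  sp * p' - sp' * p = - (p * sp' - p' * sp).
Proof. ring. Qed.

Lemma sigma_nat n : sigma n%:R = n%:R.
Proof. exact: rmorph_nat. Qed.

Lemma anti1 q : laurent q -> sigma q = - q -> Dv 1 q.
Proof. move=> hq aq. apply: (@anti_even 0) => //. exact: Dv0. Qed.

Lemma sigmaM2 f g : sigma (f * g) = sigma f * sigma g.
Proof. exact: rmorphM. Qed.

Lemma sigma_Q p p' : sigma (p * sigma p' - p' * sigma p) = - (p * sigma p' - p' * sigma p).
Proof. by rewrite rmorphB /= (sigmaM2 p) (sigmaM2 p') !sigmaK gen10. Qed.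

Lemma sigma_P p p' q q' : sigma q = - q -> sigma q' = - q' ->
  sigma (2%:R * (q * p' - q' * p)) = 2%:R * (sigma p * q' - sigma p' * q).
Proof.
move=> aq aq'. rewrite sigmaM2 rmorphB /= (sigmaM2 q) (sigmaM2 q') sigma_nat.
exact: gen9.
Qed.

Lemma derived_lvl n x : derived n x -> exists p q,
  [/\ laurent p, laurent q, sigma q = - q, x = mk p (sigma p) q & Dv n p /\ Dv n q].
Proof.
elim => {n x}.
- move=> x [p [q [hp hq aq ->]]]. exists p, q; split => //. by split; apply: Dv0.
- move=> n x y _ [p [q [hp hq aq -> [dp dq]]]] _ [p' [q' [hp' hq' aq' -> [dp' dq']]]].
  rewrite lbr_mk.
  exists (2%:R * (q * p' - q' * p)), (p * sigma p' - p' * sigma p).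
  have hs := lau_sigma hp. have hs' := lau_sigma hp'.
  split.
  + apply: lau_mul; first exact: lau_nat.
    by apply: lau_sub; apply: lau_mul.
  + by apply: lau_sub; apply: lau_mul.
  + exact: sigma_Q.
  + by rewrite (sigma_P _ _ aq aq').
  + case: n dp dq dp' dq' => [|n] dp dq dp' dq'.
    * have dq1 := anti1 hq aq. have dq1' := anti1 hq' aq'.
      split.
        apply: Dv_mull; first exact: lau_nat.
        by apply: Dv_sub; rewrite -[1%N]addn0; apply: Dv_mul.
      apply: anti1; first by apply: lau_sub; apply: lau_mul.
      exact: sigma_Q.
    * have h : (n.+2 <= n.+1 + n.+1)%N by lia.
      split.
        apply: Dv_mull; first exact: lau_nat.
        by apply: Dv_sub; apply: (Dv_le h); apply: Dv_mul.
      by apply: Dv_sub; apply: (Dv_le h); apply: Dv_mul => //; apply: Dv_sigma.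
- move=> n. exists 0, 0; split; rewrite ?rmorph0 ?oppr0 ?mk0 //; try exact: lau_0.
  by split; apply: Dv_zero.
- move=> n x y _ [p [q [hp hq aq -> [dp dq]]]] _ [p' [q' [hp' hq' aq' -> [dp' dq']]]].
  exists (p + p'), (q + q'); split; rewrite ?mkD ?rmorphD //=; try exact: lau_add.
  + by rewrite aq aq' opprD.
  + by split; apply: Dv_add.
- move=> n c x _ [p [q [hp hq aq -> [dp dq]]]].
  exists (cst c * p), (cst c * q); split; rewrite ?mkZ ?sigmaM2 ?sigma_cst //; try exact: lau_cstm.
  + by rewrite aq mulrN.
  + by split; apply: Dv_mull => //; exact: lau_cst.
Qed.

Lemma solv L : quot_solvable L.
Proof.
exists L => x /derived_lvl [p [q [hp hq aq -> [dp dq]]]].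
exists p, q; split => //.
Qed.



Lemma filter_odd_iota n :
  [seq j <- iota 0 n | odd j] = [seq i.*2.+1 | i <- iota 0 n./2].
Proof.
elim: n => [//|n IH].
rewrite -addn1 iotaD filter_cat IH /= add0n.
have e := odd_double_half n.
rewrite addn1 -uphalfE uphalf_half addnC.
case on: (odd n) e => e.
  rewrite iotaD map_cat /= add0n. rewrite add1n in e. by rewrite e.
by rewrite cats0 addn0.
Qed.

Lemma size_bf L : size (basis_family L) = (L + L./2)%N.
Proof. by rewrite /basis_family size_cat !size_map filter_odd_iota size_map !size_iota. Qed.

Lemma nth_bfX L i : (i < L)%N -> (basis_family L)`_i = Xk i.
Proof.
move=> h. rewrite /basis_family nth_cat size_map size_iota h.
by rewrite (nth_map 0%N) ?size_iota // nth_iota.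
Qed.

Lemma nth_bfY L i : (i < L./2)%N -> (basis_family L)`_(L + i) = Yk (i.*2.+1).
Proof.
move=> h. rewrite /basis_family nth_cat size_map size_iota ltnNge leq_addr /= addKn.
rewrite filter_odd_iota -map_comp.
by rewrite (nth_map 0%N) ?size_iota //= nth_iota.
Qed.

Definition PX (a : nat -> C) L := \sum_(i < L) cst (a i) * (2%:R * (tvar - 1) ^+ i).
Definition PF (a : nat -> C) L := \sum_(i < L) cst (a i) * (2%:R * (tvar^-1 - 1) ^+ i).
Definition PY (a : nat -> C) L := \sum_(i < L./2) cst (a (L + i)%N) * yy (i.*2.+1).

Lemma sum0 n : \sum_(i < n) (0 : LF) = 0.
Proof. by rewrite big1. Qed.

Lemma lcomb_bf a L : lcomb a (basis_family L) = mk (PX a L) (PF a L) (PY a L).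
Proof.
rewrite /lcomb.
rewrite -(big_mkord xpredT (fun i => cscale (a i) (basis_family L)`_i)) size_bf.
rewrite big_mkord big_split_ord /=.
have e1 : \sum_(i < L) cscale (a (lshift L./2 i)) (basis_family L)`_(lshift L./2 i)
          = mk (PX a L) (PF a L) 0.
  rewrite -(sum0 L) /PX /PF -mk_sum. apply: eq_bigr => i _ /=.
  by rewrite nth_bfX // /Xk mkZ mulr0.
have e2 : \sum_(i < L./2) cscale (a (rshift L i)) (basis_family L)`_(rshift L i)
          = mk 0 0 (PY a L).
  rewrite -(sum0 L./2) /PY -mk_sum. apply: eq_bigr => i _ /=.
  by rewrite nth_bfY // /Yk mkZ !mulr0.
by rewrite e1 e2 mkD !addr0 add0r.
Qed.

Lemma sigma_PX a L : sigma (PX a L) = PF a L.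
Proof.
rewrite /PX /PF rmorph_sum /=. apply: eq_bigr => i _.
by rewrite !sigmaM2 sigma_cst sigma_nat rmorphXn /= sigma_tm1.
Qed.

Lemma sigma_PY a L : sigma (PY a L) = - PY a L.
Proof.
rewrite /PY rmorph_sum -sumrN /=. apply: eq_bigr => i _.
by rewrite sigmaM2 sigma_cst yy_anti mulrN.
Qed.



Lemma hN_lemma i L : (i < L./2)%N -> (i.*2.+1 < L)%N.
Proof. have := odd_double_half L. rewrite -!mul2n. lia. Qed.

Lemma OA_Xk k : OA (Xk k).
Proof.
exists (2%:R * (tvar - 1) ^+ k), 0; split.
- apply: lau_mul; first exact: lau_nat. apply: lau_exp; exact: lau_u.
- exact: lau_0.
- by rewrite rmorph0 oppr0.
- by rewrite /Xk sigmaM2 sigma_nat rmorphXn /= sigma_tm1.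
Qed.

Lemma OA_Yk j : OA (Yk j).
Proof.
exists 0, (yy j); split.
- exact: lau_0.
- exact: lau_yy.
- exact: yy_anti.
- by rewrite /Yk rmorph0.
Qed.

Lemma basis_ok L : quot_basis L (basis_family L).
Proof.
split.
- move=> x; rewrite mem_cat => /orP [/mapP [k _ ->] | /mapP [j _ ->]].
    exact: OA_Xk.
  exact: OA_Yk.
- move=> a [p [q [[hp hq aq e] [[r [hr er]] [r' [hr' er']]]]]] i hi.
  rewrite lcomb_bf in e. case: (mk_inj e) => eX _ eY.
  have dX : Dv L (PX a L) by exists r; rewrite eX er.
  have dY : Dv L (PY a L) by exists r'; rewrite eY er'.
  rewrite size_bf in hi. case: (ltnP i L) => hiL.
    apply: (tri_indep (n:=L) (N:=L) (e:=id) (g:=fun i => 2%:R * u ^+ i) (kap:=2%:R) (b:=a)) => //.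
    + exact: two_neq0.
    + by move=> j; rewrite cst_nat subrr; exact: Dv_zero.
  have ei : i = (L + (i - L))%N by rewrite subnKC.
  have hj : (i - L < L./2)%N by lia.
  rewrite ei.
  apply: (tri_indep (n:=L./2) (N:=L) (e:=fun i => i.*2.+1) (g:=fun i => yy i.*2.+1)
     (kap:= - 2%:R) (b:=fun j => a (L + j)%N)) => //.
  + by rewrite oppr_eq0 two_neq0.
  + by move=> j; apply: yy_odd; rewrite /= odd_double.
  + by move=> j /=; rewrite -!mul2n; lia.
- move=> x [p [q [hp hq aq ->]]].
  have [c hc] := expand L hp.
  have [b hb] : Yspan L q.
    apply: (Yspan_aux (k:=L)) => //. rewrite subnn. exact: Dv0.
  exists (fun i => if (i < L)%N then c i / 2%:R else b (i - L)%N).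
  set a := (fun i => _).
  have ePX : PX a L = \sum_(i < L) cst (c i) * u ^+ i.
    apply: eq_bigr => i _. rewrite /a ltn_ord mulrA -cst_nat -cstM divfK //.
    exact: two_neq0.
  have ePY : PY a L = \sum_(i < L./2) cst (b i) * yy (i.*2.+1).
    apply: eq_bigr => i _. by rewrite /a ltnNge leq_addr /= addKn.
  rewrite lcomb_bf mkB -sigma_PX -rmorphB.
  exists (p - PX a L), (q - PY a L); split.
  + split.
    * rewrite ePX. exact: Dv_lau hc.
    * rewrite ePY. exact: Dv_lau hb.
    * by rewrite rmorphB /= aq sigma_PY opprB opprK addrC.
    * by [].
  + split; [by rewrite ePX; exact: hc | by rewrite ePY; exact: hb].
Qed.

Local Close Scope ring_scope.

Theorem proposition4 (L : nat) :
  (1 <= L)%N ->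
  [/\ quot_solvable L, quot_dim L (L + L./2) & quot_basis L (basis_family L)].
Proof.
move=> _. split.
- exact: solv.
- exists (basis_family L); split; [exact: size_bf | exact: basis_ok].
- exact: basis_ok.
Qed.
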